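(* The approximation ratio $\frac{13}{15}$ of the $\alpha$-pass algorithm for the clique inference problem with nonnegative vertex potentials and Potts clique potential $C(\mathbf{v})=\lambda\sum_{v}n_v(\mathbf{v})^2$, $\lambda>0$, is tight: there is a family of such instances (with $\lambda=1$, indexed by the number of vertices $n$) for which the ratio $F(\hat{\mathbf{v}})/F(\mathbf{v}^* )$ between the score of the assignment $\hat{\mathbf{v}}$ returned by $\alpha$-pass and the optimal score tends to $\frac{13}{15}$ as $n\to\infty$.
   Context: Clique inference problem: there are $n$ vertices $1,\dots,n$, a finite set $V$ of values, real vertex potentials $\psi_{jv}$ ($1\le j\le n$, $v\in V$), and a clique potential $C$ depending only on the counts $n_v(\mathbf{v})=|\{j:v_j=v\}|$. The objective is $F(\mathbf{v})=\sum_{j=1}^n\psi_{jv_j}+C(\mathbf{v})$ over $\mathbf{v}\in V^n$; $\mathbf{v}^*$ is a maximizer. The $\alpha$-pass algorithm: for each $\alpha\in V$, sort the vertices in decreasing order of $\psi_{j\alpha}-\max_{v\neq\alpha}\psi_{jv}$; for each $k\in\{1,\dots,n\}$ form the assignment giving the first $k$ sorted vertices the value $\alpha$ and every other vertex a value $v\ne\alpha$ maximizing $\psi_{jv}$; output the formed assignment with the largest $F$ over all $\alpha$ and $k$. *)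

(* Defs.v *)
From HB Require Import structures.
From mathcomp Require Import all_boot all_order all_algebra.
From mathcomp Require Import all_classical all_reals all_analysis.
From mathcomp Require Import fingroup perm.
Set Implicit Arguments. Unset Strict Implicit. Unset Printing Implicit Defensive.
Import Order.TTheory GRing.Theory Num.Theory.
Local Open Scope ring_scope.

Section CliqueInference.
Variables (R : realType) (n m : nat).
Variable psi : 'I_n -> 'I_m -> R.

Definition nval (v : {ffun 'I_n -> 'I_m}) (a : 'I_m) : nat := #|[set j | v j == a]|.

Definition potts_F (lam : R) (v : {ffun 'I_n -> 'I_m}) : R :=
  \sum_(j < n) psi j (v j) + lam * \sum_(a < m) ((nval v a)%:R ^+ 2).

Definition is_optimal (lam : R) (v : {ffun 'I_n -> 'I_m}) : Prop :=
  forall w : {ffun 'I_n -> 'I_m}, potts_F lam w <= potts_F lam v.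

(* the quantity by which vertices are sorted in the alpha-pass:
   psi_{j alpha} - max_{v <> alpha} psi_{j v};  b alpha j is the chosen
   maximizer v <> alpha of psi_{j v} (tie-breaking is part of the run). *)
Definition best_other (b : 'I_m -> 'I_n -> 'I_m) : Prop :=
  forall (a : 'I_m) (j : 'I_n), b a j != a /\
    forall v : 'I_m, v != a -> psi j v <= psi j (b a j).

(* sigma a is the sorted order of the vertices for alpha = a: position p holds
   vertex sigma a p, in decreasing order of psi_{j a} - psi_{j (b a j)}. *)
Definition sorted_order (b : 'I_m -> 'I_n -> 'I_m) (sigma : 'I_m -> {perm 'I_n}) : Prop :=
  forall (a : 'I_m) (p q : 'I_n), (p <= q)%N ->
    psi (sigma a q) a - psi (sigma a q) (b a (sigma a q))
      <= psi (sigma a p) a - psi (sigma a p) (b a (sigma a p)).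

Definition formed (b : 'I_m -> 'I_n -> 'I_m) (sigma : 'I_m -> {perm 'I_n})
  (a : 'I_m) (k : nat) : {ffun 'I_n -> 'I_m} :=
  [ffun j => if ((((sigma a)^-1)%g j : 'I_n) < k)%N then a else b a j].

(* vhat is a possible output of the alpha-pass algorithm (for some valid
   tie-breaking): it is one of the formed assignments (alpha in V, 1 <= k <= n)
   with the largest F among all of them. *)
Definition alpha_pass_output (lam : R) (vhat : {ffun 'I_n -> 'I_m}) : Prop :=
  exists (b : 'I_m -> 'I_n -> 'I_m) (sigma : 'I_m -> {perm 'I_n}),
    [/\ best_other b, sorted_order b sigma,
        (exists (a : 'I_m) (k : nat), [/\ (1 <= k)%N, (k <= n)%N & vhat = formed b sigma a k])
      & forall (a : 'I_m) (k : nat), (1 <= k)%N -> (k <= n)%N ->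
          potts_F lam (formed b sigma a k) <= potts_F lam vhat].

End CliqueInference.

(* Main.v *)
Require Import Defs.
From HB Require Import structures.
From mathcomp Require Import all_boot all_order all_algebra.
From mathcomp Require Import all_classical all_reals all_analysis.
From mathcomp Require Import fingroup perm.
Import Order.TTheory GRing.Theory Num.Theory.
Import numFieldNormedType.Exports.
From mathcomp Require Import zify ring lra.
Set Implicit Arguments. Unset Strict Implicit. Unset Printing Implicit Defensive.

Definition psin (s j a : nat) : nat := (4*s+1) * (a == j) + 4*s * (a == 3*s + j %/ s).

Definition Fn (s : nat) {n m} (v : {ffun 'I_n -> 'I_m}) : nat :=
  \sum_(j < n) psin s j (v j) + \sum_(a < m) nval v a ^ 2.

Lemma sumG (f : nat -> nat) q s : 0 < s ->
  \sum_(0 <= j < q * s) f (j %/ s) = \sum_(0 <= i < q) s * f i.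
Proof.
move=> s0; elim: q => [|q IH]; first by rewrite mul0n !big_geq.
rewrite mulSn addnC (big_cat_nat _ (n := q * s)) //= ?leq_addr // IH big_nat_recr //=.
congr (_ + _).
rewrite (eq_big_nat _ _ (F2 := fun _ => f q)); first by rewrite sum_nat_const_nat addKn.
move=> j /andP [h1 h2]; congr f.
have -> : j = q * s + (j - q * s) by rewrite subnKC.
by rewrite divnMDl // divn_small ?addn0 // ltn_subLR.
Qed.

Lemma sum_eq1 a n : \sum_(0 <= j < n) (a == j) = (a < n).
Proof.
elim: n => [|n IH]; first by rewrite big_geq.
rewrite big_nat_recr //= IH; case: (a =P n) => [->|h] /=; lia.
Qed.

Lemma sum_nval n m (v : {ffun 'I_n -> 'I_m}) : \sum_a nval v a = n.
Proof.
rewrite -[RHS]card_ord -sum1_card (partition_big v predT) //=.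
apply: eq_bigr => a _; rewrite /nval -sum1_card; apply: eq_bigl => j; by rewrite inE.
Qed.

Lemma sq_vert n m (v : {ffun 'I_n -> 'I_m}) :
  \sum_a nval v a ^ 2 = \sum_j nval v (v j).
Proof.
rewrite (partition_big v predT) //=; apply: eq_bigr => a _.
rewrite (eq_bigr (fun _ => nval v a)); last by move=> j /eqP ->.
rewrite sum_nat_const /nval cardsE; congr (_ * _).
Qed.

Lemma decomp s n m (v : {ffun 'I_n -> 'I_m}) :
  Fn s v = \sum_a (nval v a ^ 2 + \sum_(j | v j == a) psin s j a).
Proof.
rewrite /Fn [RHS]big_split /= addnC; congr (_ + _).
rewrite (partition_big v predT) //=; apply: eq_bigr => a _.
by apply: eq_bigr => j /eqP ->.
Qed.

Lemma psin_le s j a : j < 3 * s -> psin s j a <= 4 * s + 1.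
Proof.
move=> hj; rewrite /psin; case E1: (a == j); case E2: (a == 3 * s + j %/ s); try lia.
move/eqP: E1 => E1; move/eqP: E2; move: (j %/ s) => q E2; lia.
Qed.

Lemma L_le1 s m (v : {ffun 'I_(3 * s) -> 'I_m}) a :
  \sum_(j | v j == a) psin s j a <= (4 * s + 1) * nval v a.
Proof.
apply: (@leq_trans (\sum_(j | v j == a) (4*s+1))).
  by apply: leq_sum => j _; apply: psin_le.
by rewrite sum_nat_const /nval cardsE mulnC.
Qed.

Lemma L_le2 s m (v : {ffun 'I_(3 * s) -> 'I_m}) (a : 'I_m) : 0 < s ->
  \sum_(j | v j == a) psin s j a <= (4 * s + 1) * s.
Proof.
move=> s0.
apply: (@leq_trans (\sum_(j < 3 * s) psin s j a)).
  rewrite [X in _ <= X](bigID (fun j => v j == a)) /=; exact: leq_addr.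
rewrite -(big_mkord xpredT (fun j => psin s j a)) /psin big_split /= -!big_distrr /= sum_eq1.
rewrite (sumG (fun i => (a : nat) == 3 * s + i)) //.
rewrite !big_nat_recr //= big_geq //.
case: a => x _ /=; case: (x =P 3*s+0); case: (x =P 3*s+1); case: (x =P 3*s+2); case: ltnP; nia.
Qed.

Lemma nval_le n m (v : {ffun 'I_n -> 'I_m}) a : nval v a <= n.
Proof. by rewrite /nval -[X in _ <= X]card_ord max_card. Qed.

Lemma opt_bound s m (v : {ffun 'I_(3 * s) -> 'I_m}) : 0 < s ->
  Fn s v <= 15 * s ^ 2 + 3 * s.
Proof.
move=> s0; rewrite decomp.
apply: (@leq_trans (\sum_a (5 * s + 1) * nval v a)).
  apply: leq_sum => a _.
  have h1 := L_le1 v a; have h2 := L_le2 v a s0; have ht := nval_le v a.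
  move: (\sum_(j | v j == a) psin s j a) h1 h2 => L h1 h2.
  move: (nval v a) h1 ht => t h1 ht.
  case: (leqP t s) => hts; nia.
rewrite -big_distrr /= sum_nval; nia.
Qed.

Lemma formed_le1 s m (v : {ffun 'I_(3 * s) -> 'I_m}) (a c : 'I_m) :
  (forall j, v j = a \/ (v j : nat) = (if (a : nat) == j then 3 * s + j %/ s else j)) ->
  c != a -> nval v c <= 1.
Proof.
move=> H ca; apply/card_le1_eqP => x y; rewrite !inE => /eqP hx /eqP hy.
have := H x; have := H y; rewrite hx hy => [[Ey|Ey]].
  by rewrite Ey eqxx in ca.
move=> [Ex|Ex]; first by rewrite Ex eqxx in ca.
apply: val_inj => /=; move: Ex Ey (ltn_ord x) (ltn_ord y).
move: (x %/ s) (y %/ s) => qx qy.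
case: ifP => /eqP hax; case: ifP => /eqP hay; lia.
Qed.

Lemma formed_bound s m (v : {ffun 'I_(3 * s) -> 'I_m}) (a : 'I_m) : 0 < s ->
  (forall j, v j = a \/ (v j : nat) = (if (a : nat) == j then 3 * s + j %/ s else j)) ->
  Fn s v <= 13 * s ^ 2 + 5 * s.
Proof.
move=> s0 H; rewrite decomp (bigD1 a) //=.
have hsum := sum_nval v; rewrite (bigD1 a) //= in hsum.
apply: (@leq_trans (nval v a ^ 2 + \sum_(j | v j == a) psin s j a +
          (4 * s + 2) * \sum_(c | c != a) nval v c)).
  rewrite leq_add2l big_distrr /=; apply: leq_sum => c ca.
  have h1 := L_le1 v c; have h2 := formed_le1 H ca.
  move: (\sum_(j | v j == c) psin s j c) h1 => L h1.
  move: (nval v c) h1 h2 => t h1 h2; nia.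
have h1 := L_le1 v a; have h2 := L_le2 v a s0; have ht := nval_le v a.
move: (\sum_(c | c != a) nval v c) hsum => r hsum.
move: (\sum_(j | v j == a) psin s j a) h1 h2 => L h1 h2.
move: (nval v a) h1 ht hsum => t h1 ht hsum.
case: (leqP t s) => hts; nia.
Qed.

Lemma card_sum n (P : pred 'I_n) : #|[set i | P i]| = \sum_(i < n) P i.
Proof.
rewrite cardsE -sum1_card big_mkcond /=; apply: eq_bigr => i _.
by rewrite unfold_in; case: (P i).
Qed.

Lemma const_lower s m (v : {ffun 'I_(3 * s) -> 'I_m}) (c0 : 'I_m) : 0 < s ->
  (c0 : nat) = 3 * s -> (forall j, v j = c0) -> 13 * s ^ 2 <= Fn s v.
Proof.
move=> s0 hc Hv; rewrite /Fn.
have -> : \sum_(j < 3 * s) psin s j (v j) = 4 * s * s.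
  rewrite (eq_bigr (fun j : 'I_(3 * s) => psin s j (3 * s))); last by move=> j _; rewrite Hv hc.
  rewrite -(big_mkord xpredT (fun j => psin s j (3 * s))).
  rewrite (eq_big_nat _ _ (F2 := fun j => 4 * s * (j %/ s == 0))); last first.
    move=> j /andP [_ hj]; rewrite /psin.
    have -> : (3 * s == 3 * s + j %/ s) = (j %/ s == 0).
      by rewrite -[X in X == _]addn0 eqn_add2l eq_sym.
    have -> : (3 * s == j) = false by apply/negbTE; rewrite neq_ltn hj orbT.
    by rewrite muln0 add0n.
  rewrite (sumG (fun i => 4 * s * (i == 0))) //.
  rewrite !big_nat_recr //= big_geq //; nia.
rewrite (bigD1 c0) //=.
have -> : nval v c0 = 3 * s.
  by rewrite /nval -[RHS]card_ord; apply: eq_card => j; rewrite inE Hv eqxx.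
nia.
Qed.

Lemma opt_lower s m (w : {ffun 'I_(3 * s) -> 'I_m}) : 0 < s ->
  (forall j, (w j : nat) = 3 * s + j %/ s) -> 15 * s ^ 2 <= Fn s w.
Proof.
move=> s0 Hw; rewrite /Fn sq_vert.
have -> : \sum_(j < 3 * s) psin s j (w j) = \sum_(j < 3 * s) 4 * s.
  apply: eq_bigr => j _; rewrite /psin Hw eqxx muln1.
  have -> : (3 * s + j %/ s == j) = false.
    by apply/negbTE; rewrite neq_ltn (leq_trans (ltn_ord j)) ?orbT // leq_addr.
  by rewrite muln0.
have -> : \sum_(j < 3 * s) nval w (w j) = \sum_(j < 3 * s) s.
  apply: eq_bigr => j _; rewrite /nval card_sum.
  rewrite (eq_bigr (fun i : 'I_(3 * s) => (i %/ s == j %/ s) : nat)); last first.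
    by move=> i _; rewrite -val_eqE /= !Hw eqn_add2l.
  rewrite -(big_mkord xpredT (fun i => (i %/ s == j %/ s) : nat)).
  rewrite (sumG (fun i => (i == j %/ s) : nat)) //.
  have : j %/ s < 3 by rewrite ltn_divLR // mulnC.
  move: (j %/ s) => q hq.
  rewrite !big_nat_recr //= big_geq //.
  by case: q hq => [|[|[|q]]] //= _; rewrite ?muln0 ?muln1 ?add0n ?addn0.
rewrite !sum_nat_const card_ord; nia.
Qed.

Unset Implicit Arguments.
Local Open Scope classical_set_scope.
Local Open Scope ring_scope.

Definition psiR (R : realType) (k : nat) (j : 'I_(3 * k.+1)) (a : 'I_(3 * k.+1 + 3)) : R :=
  (psin k.+1 j a)%:R.

Lemma F_nat (R : realType) k (v : {ffun 'I_(3 * k.+1) -> 'I_(3 * k.+1 + 3)}) :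
  potts_F (psiR R k) 1 v = (Fn k.+1 v)%:R.
Proof.
rewrite /potts_F /Fn mul1r natrD natr_sum natr_sum; congr (_ + _).
by apply: eq_bigr => a _; rewrite natrX.
Qed.

Lemma best_char (R : realType) k b : best_other (psiR R k) b ->
  forall a j, (b a j : nat) = (if (a : nat) == j then 3 * k.+1 + j %/ k.+1 else j)%N.
Proof.
move=> hb a j; have [hne hmax] := hb a j.
have hj := ltn_ord j.
have hq : (j %/ k.+1 < 3)%N by rewrite ltn_divLR // mulnC.
case: ifP => /eqP haj.
  have hv : (3 * k.+1 + j %/ k.+1 < 3 * k.+1 + 3)%N by rewrite ltn_add2l.
  have := hmax (Ordinal hv).
  have hva : Ordinal hv != a by rewrite -val_eqE /= haj; apply/eqP => E; lia.
  move=> /(_ hva); rewrite /psiR ler_nat /psin /=.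
  move: hne; rewrite -val_eqE /= haj => hne.
  move: (b a j : nat) hne => x hne.
  move: (j %/ k.+1)%N hq => q hq.
  case: (x =P j) hne => [->|_]; first by rewrite eqxx.
  move=> _; rewrite eqxx; case: (x =P _) => [-> //|_] /=; lia.
have hv : ((j : nat) < 3 * k.+1 + 3)%N by apply: (leq_trans hj); rewrite leq_addr.
have := hmax (Ordinal hv).
have hva : Ordinal hv != a by rewrite -val_eqE /=; apply/eqP => E; apply: haj.
move=> /(_ hva); rewrite /psiR ler_nat /psin /= eqxx.
move: (b a j : nat) => x.
move: (j %/ k.+1)%N hq => q hq.
case: (x =P j) => [-> //|_]; case: (x =P 3 * k.+1 + q)%N; case: ((j : nat) =P 3 * k.+1 + q)%N => /=; lia.
Qed.

Lemma ratio_bd (R : realFieldType) (x y z : R) : 1 <= z ->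
  13 * z ^+ 2 <= x -> x <= 13 * z ^+ 2 + 5 * z ->
  15 * z ^+ 2 <= y -> y <= 15 * z ^+ 2 + 3 * z -> `|13 / 15 - x / y| <= z^-1.
Proof.
move=> z1 hx1 hx2 hy1 hy2.
have z0 : 0 < z by lra.
have y0 : 0 < y by nra.
have -> : 13 / 15 - x / y = (13 * y - 15 * x) / (15 * y).
  by field; apply: lt0r_neq0.
have y15 : 0 < 15 * y by lra.
rewrite normrM normfV (gtr0_norm y15) ler_pdivrMr // ler_pdivlMl //.
have ha : `|13 * y - 15 * x| <= 75 * z by rewrite ler_norml; apply/andP; split; lra.
apply: (le_trans (ler_wpM2l (ltW z0) ha)); nra.
Qed.

Theorem theorem5 (R : realType) :
  exists (N M : nat -> nat) (psi : forall k : nat, 'I_(N k) -> 'I_(M k) -> R),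
    [/\ (forall k, (1 <= N k)%N /\ (k <= N k)%N),
        (forall k, (2 <= M k)%N),
        (forall k j a, 0 <= psi k j a)
      & forall (vhat vstar : forall k : nat, {ffun 'I_(N k) -> 'I_(M k)}),
          (forall k, alpha_pass_output (psi k) 1 (vhat k)) ->
          (forall k, is_optimal (psi k) 1 (vstar k)) ->
          (fun k => potts_F (psi k) 1 (vhat k) / potts_F (psi k) 1 (vstar k))
            @ \oo --> (13 / 15 : R)].
Proof.
exists (fun k => 3 * k.+1)%N, (fun k => 3 * k.+1 + 3)%N, (psiR R); split.
- by move=> k; split; lia.
- by move=> k; lia.
- by move=> k j a; exact: ler0n.
move=> vhat vstar Hal Hopt.
have hA : forall k, (13 * k.+1 ^ 2 <= Fn k.+1 (vhat k) <= 13 * k.+1 ^ 2 + 5 * k.+1)%N.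
  move=> k; have [b [sigma [hb hs [a [kk [h1 h2 ->]]] hmax]]] := Hal k.
  have hc : (3 * k.+1 < 3 * k.+1 + 3)%N by lia.
  apply/andP; split.
    have h := hmax (Ordinal hc) (3 * k.+1)%N ltac:(lia) (leqnn _).
    rewrite !F_nat ler_nat in h; apply: leq_trans h.
    apply: (const_lower (c0 := Ordinal hc)) => // j; by rewrite ffunE ltn_ord.
  apply: (formed_bound (a := a)) => // j; rewrite ffunE; case: ifP => _.
    by left.
  by right; exact: best_char hb a j.
have hB : forall k, (15 * k.+1 ^ 2 <= Fn k.+1 (vstar k) <= 15 * k.+1 ^ 2 + 3 * k.+1)%N.
  move=> k; apply/andP; split; last exact: opt_bound.
  have hw : forall j : 'I_(3 * k.+1), (3 * k.+1 + j %/ k.+1 < 3 * k.+1 + 3)%N.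
    by move=> j; rewrite ltn_add2l ltn_divLR // mulnC.
  have h := Hopt k [ffun j => Ordinal (hw j)].
  rewrite !F_nat ler_nat in h; apply: leq_trans h.
  by apply: opt_lower => // j; rewrite ffunE.
apply/cvgrPdist_le => e e0.
near=> k.
apply: (@le_trans _ _ (k.+1%:R^-1)); last first.
  by apply/ltW; near: k; exact: near_infty_natSinv_lt (PosNum e0).
rewrite /= !F_nat.
have [a1 a2] := andP (hA k); have [b1 b2] := andP (hB k).
move: (Fn k.+1 (vhat k)) (Fn k.+1 (vstar k)) a1 a2 b1 b2 => A B.
rewrite -!(ler_nat R) !natrD !natrM -!expr2 => a1 a2 b1 b2.
by apply: (ratio_bd _ _ _ _ _ a1 a2 b1 b2); rewrite ler1n.
Unshelve. all: end_near.
Qed.
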